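(* Let $\mathcal G=\langle V=V_{\mathrm{Min}}\uplus V_{\mathrm{Max}}, V_T, A, E, \omega\rangle$ be a finite weighted game and $c\colon V_T\to\mathbb Z$. Assume that the subgraph induced by $V\setminus V_T$ is strongly connected, that every cycle all of whose vertices lie in $V\setminus V_T$ has negative weight, and that no vertex has value $+\infty$ (with respect to $c$). Then a vertex $v\in V\setminus V_T$ has value $-\infty$ if and only if $v$ does not belong to the attractor of Max to $V_T$.
   Context: A weighted game has vertices $V$ partitioned into vertices of Min and of Max, targets $V_T\subseteq V_{\mathrm{Min}}$, alphabet $A$, edges $E\subseteq V\times A\times V$, weights $\omega\colon E\to\mathbb Z$, and is deadlock-free and deterministic (for each $(v,a)$ at most one $v'$ with $(v,a,v')\in E$). A cycle is a finite sequence of consecutive edges starting and ending at the same vertex (length $\ge 1$); its weight is the sum of its edge weights. A strategy of a player chooses, after each finite play ending in one of its vertices, a letter of an outgoing edge. With target values $c$, the weight of a play is $+\infty$ if it never visits $V_T$, and otherwise the sum of its edge weights up to the first visit of some $t\in V_T$ plus $c(t)$; the value of $v$ is $\inf_{\sigma_{\mathrm{Min}}}\sup_{\sigma_{\mathrm{Max}}}$ (equal to $\sup_{\sigma_{\mathrm{Max}}}\inf_{\sigma_{\mathrm{Min}}}$) of the weight of the outcome from $v$. The attractor of Max to $V_T$ is the set of vertices $v$ from which Max has a strategy such that every play from $v$ conforming to it visits $V_T$. *)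

(* Defs.v *)
From HB Require Import structures.
From mathcomp Require Import all_boot all_order all_algebra.
From mathcomp Require Import boolp classical_sets reals constructive_ereal ereal.
Set Implicit Arguments. Unset Strict Implicit. Unset Printing Implicit Defensive.
Import Order.TTheory GRing.Theory Num.Theory.

(* A finite weighted game is given by:
   - V : finType (vertices), A : finType (alphabet),
   - isMax : pred V  (vertices of Max; the others are vertices of Min),
   - T : pred V      (target vertices V_T),
   - edge : V -> A -> option V  (deterministic edge relation:
       (v,a,v') \in E  iff  edge v a = Some v'),
   - w : V -> A -> int  (weight of the edge (v,a,edge v a)).
   Finite plays from v0 are represented by v0 together with the word of
   letters played so far (this determines the play, by determinism). *)

Section Game.
Variables (V A : finType) (isMax : pred V) (T : pred V)
  (edge : V -> A -> option V) (w : V -> A -> int).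

Definition deadlock_free := forall v, exists a, edge v a != None.

Definition targets_min := forall v, T v -> ~~ isMax v.

Fixpoint run (v0 : V) (ws : seq A) : option V :=
  match ws with
  | [::] => Some v0
  | a :: ws' => match edge v0 a with Some v1 => run v1 ws' | None => None end
  end.

Fixpoint path_in (P : pred V) (v0 : V) (ws : seq A) : bool :=
  match ws with
  | [::] => P v0
  | a :: ws' => P v0 && (match edge v0 a with
                         | Some v1 => path_in P v1 ws'
                         | None => false end)
  end.

Fixpoint path_weight (v0 : V) (ws : seq A) : int :=
  match ws with
  | [::] => 0%R
  | a :: ws' => match edge v0 a with
                | Some v1 => (w v0 a + path_weight v1 ws')%R
                | None => 0%R end
  end.

Definition neg_cycles_outside_targets :=
  forall (v : V) (ws : seq A),
    0 < size ws -> path_in (predC T) v ws -> run v ws = Some v ->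
    (path_weight v ws < 0)%R.

Definition nontarget_edge : rel V :=
  fun x y => [&& ~~ T x, ~~ T y & [exists a, edge x a == Some y]].
Definition strongly_connected_outside_targets :=
  forall u v, ~~ T u -> ~~ T v -> connect nontarget_edge u v.

Definition strategy := V -> seq A -> A.

Definition valid_strategy (b : bool) (s : strategy) :=
  forall v0 ws u, run v0 ws = Some u -> isMax u = b -> edge u (s v0 ws) != None.

Section Outcome.
Variables (smin smax : strategy) (v0 : V).

Definition choice (u : V) (ws : seq A) : A :=
  if isMax u then smax v0 ws else smin v0 ws.

Fixpoint state (n : nat) : V * seq A :=
  match n with
  | 0 => (v0, [::])
  | n'.+1 => let: (u, ws) := state n' in
             let a := choice u ws in
             match edge u a with
             | Some u' => (u', rcons ws a)
             | None => (u, rcons ws a) end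
  end.

Definition pos (n : nat) : V := (state n).1.
Definition letter (n : nat) : A := choice (state n).1 (state n).2.

End Outcome.

Definition payoff {R : realType} (c : V -> int) (smin smax : strategy) (v0 : V)
  : \bar R :=
  match pselect (exists n, T (pos smin smax v0 n)) with
  | left H =>
      let n := ex_minn H in
      (((\sum_(i < n) w (pos smin smax v0 i) (letter smin smax v0 i))
         + c (pos smin smax v0 n))%R%:~R)%:E
  | right _ => +oo%E
  end.

Definition game_value {R : realType} (c : V -> int) (v : V) : \bar R :=
  ereal_inf [set ereal_sup [set payoff c smin smax v | smax in
                             [set s | valid_strategy true s]]
            | smin in [set s | valid_strategy false s]].

Definition conforms_max (s : strategy) (v : V) (p : nat -> V) (a : nat -> A) :=
  [/\ p 0 = v,
      forall n, edge (p n) (a n) = Some (p n.+1) &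
      forall n, isMax (p n) -> a n = s v (mkseq a n)].

Definition max_attractor (v : V) :=
  exists s, valid_strategy true s /\
    forall p a, conforms_max s v p a -> exists n, T (p n).

End Game.

(* Main.v *)
Require Import Defs.
From HB Require Import structures.
From mathcomp Require Import all_boot all_order all_algebra.
From mathcomp Require Import boolp classical_sets reals constructive_ereal ereal.
Import Order.TTheory GRing.Theory Num.Theory.
From mathcomp Require Import zify lra.
Set Implicit Arguments. Unset Strict Implicit.

Section Aux.
Variables (V A : finType) (isMax T : pred V) (edge : V -> A -> option V) (w : V -> A -> int).

Lemma run_cat v ws1 ws2 : run edge v (ws1 ++ ws2) = obind (fun u => run edge u ws2) (run edge v ws1).
Proof. by elim: ws1 v => [|a ws1 IH] v //=; case: (edge v a). Qed.

Lemma run_rcons v ws a : run edge v (rcons ws a) = obind (fun u => edge u a) (run edge v ws).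
Proof. by rewrite -cats1 run_cat; case: (run edge v ws) => //= u; case: (edge u a). Qed.

Lemma path_weight_cat v ws1 ws2 u : run edge v ws1 = Some u ->
  path_weight edge w v (ws1 ++ ws2) = (path_weight edge w v ws1 + path_weight edge w u ws2)%R.
Proof.
elim: ws1 v => [|a ws1 IH] v /=; first by move=> [->]; rewrite add0r.
case: (edge v a) => // v1 /IH ->; by rewrite addrA.
Qed.

Lemma path_in_head P v ws : path_in edge P v ws -> P v.
Proof. by case: ws => [|a ws] //= /andP[]. Qed.

Lemma path_in_cat P v ws1 ws2 u : run edge v ws1 = Some u ->
  path_in edge P v (ws1 ++ ws2) = path_in edge P v ws1 && path_in edge P u ws2.
Proof.
elim: ws1 v => [|a ws1 IH] v /=.
  move=> [->]; case H: (path_in edge P u ws2); last by rewrite andbF.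
  by rewrite (path_in_head H).
case: (edge v a) => // v1 /IH ->; by rewrite andbA.
Qed.

Section Outcome.
Variables (smin smax : strategy V A) (v0 : V).
Local Notation st := (state isMax edge smin smax v0).
Local Notation ps := (pos isMax edge smin smax v0).
Local Notation lt := (letter isMax edge smin smax v0).

Lemma state_word n : (st n).2 = mkseq lt n.
Proof.
elim: n => [|n IH] //=; rewrite mkseqS -IH /letter.
by case: (st n) => u ws /=; case: (edge u _).
Qed.

Lemma size_word n : size (st n).2 = n.
Proof. by rewrite state_word size_mkseq. Qed.

Hypothesis Hmin : valid_strategy isMax edge false smin.
Hypothesis Hmax : valid_strategy isMax edge true smax.

Lemma run_state_edge n : run edge v0 (st n).2 = Some (ps n) /\ edge (ps n) (lt n) = Some (ps n.+1).
Proof.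
elim: n => [|n [IH _]]; last move: IH.
- rewrite /pos /letter /=. rewrite /Defs.choice.
  case E: (isMax v0).
  + have := Hmax (ws:=[::]) (v0:=v0) (u:=v0) erefl E; case: (edge v0 _) => //.
  + have := Hmin (ws:=[::]) (v0:=v0) (u:=v0) erefl E; case: (edge v0 _) => //.
- rewrite /pos /letter /=. case Es: (st n) => [u ws] /= IH.
  have Hv: edge u (Defs.choice isMax smin smax v0 u ws) != None.
    rewrite /Defs.choice; case E: (isMax u).
    + exact: Hmax IH E.
    + exact: Hmin IH E.
  case Ee: (edge u _) Hv => [u'|] // _ /=.
  have H2 : run edge v0 (rcons ws (Defs.choice isMax smin smax v0 u ws)) = Some u'.
    by rewrite run_rcons IH /= Ee.
  split=> //.
  rewrite /Defs.choice; case E: (isMax u').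
  + by have := Hmax H2 E; case: (edge u' _).
  + by have := Hmin H2 E; case: (edge u' _).
Qed.

Lemma word_rcons n : (st n.+1).2 = rcons (st n).2 (lt n).
Proof. by rewrite !state_word mkseqS. Qed.

Lemma word_weight n : (\sum_(i < n) w (ps i) (lt i))%R = path_weight edge w v0 (st n).2.
Proof.
elim: n => [|n IH]; first by rewrite big_ord0.
have [Hr He] := run_state_edge n.
rewrite big_ord_recr /= IH word_rcons -cats1 (path_weight_cat _ Hr) /= He addr0 //.
Qed.

Lemma word_path_in (P : pred V) n : (forall i, i <= n -> P (ps i)) -> path_in edge P v0 (st n).2.
Proof.
elim: n => [|n IH] HP; first by have := HP 0 (leqnn 0).
have [Hr He] := run_state_edge n.
rewrite word_rcons -cats1 (path_in_cat _ _ Hr) IH; last by move=> i Hi; apply: HP; apply: leqW.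
by rewrite /= He HP // HP // leqW.
Qed.

End Outcome.

Section Payoff.
Variables (R : realType) (c : V -> int) (smin smax : strategy V A) (v0 : V).
Local Notation ps := (pos isMax edge smin smax v0).
Local Notation lt := (letter isMax edge smin smax v0).

Lemma payoff_hit n : T (ps n) -> (forall k, k < n -> ~~ T (ps k)) ->
  payoff isMax T edge w c smin smax v0 =
  ((((\sum_(i < n) w (ps i) (lt i)) + c (ps n))%R)%:~R)%:E :> \bar R.
Proof.
move=> Hn Hk; rewrite /payoff; case: pselect => [H|H]; last by exfalso; apply: H; exists n.
case: ex_minnP => m Tm Hm.
have -> // : m = n.
apply/eqP; rewrite eqn_leq Hm // leqNgt; apply/negP => /Hk; by rewrite Tm.
Qed.

Lemma payoff_fin : payoff isMax T edge w c smin smax v0 <> +oo%E :> \bar R ->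
  exists n, T (ps n) /\ forall k, k < n -> ~~ T (ps k).
Proof.
rewrite /payoff; case: pselect => [H|H] // _.
case: (ex_minnP H) => m Tm Hm; exists m; split => // k Hk; apply/negP => Tk.
by have := Hm k Tk; rewrite leqNgt Hk.
Qed.
End Payoff.
End Aux.

Lemma letter_eq V A isMax edge (smin smax : strategy V A) v0 n :
  letter isMax edge smin smax v0 n =
  if isMax (pos isMax edge smin smax v0 n) then smax v0 (state isMax edge smin smax v0 n).2
  else smin v0 (state isMax edge smin smax v0 n).2.
Proof. by []. Qed.


Section Cyc.
Variables (V A : finType) (T : pred V) (edge : V -> A -> option V) (w : V -> A -> int).
Hypothesis Hneg : neg_cycles_outside_targets T edge w.
Variable W : nat.
Hypothesis HW : forall u a, (w u a <= W%:Z)%R.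

Lemma path_in_take P v ws k : path_in edge P v ws ->
  exists u, run edge v (take k ws) = Some u /\ path_in edge P u (drop k ws).
Proof.
elim: ws v k => [|a ws IH] v k /=; first by move=> H; exists v; case: k.
case: k => [|k] /=; first by move=> H; exists v; rewrite H.
case/andP => _; case: (edge v a) => // v1; exact: IH.
Qed.

Lemma weight_le_size v ws : (path_weight edge w v ws <= (size ws * W)%:Z)%R.
Proof.
elim: ws v => [|a ws IH] v //=.
case: (edge v a) => // v1.
rewrite mulSn PoszD lerD //.
Qed.

Lemma path_bound L : forall v ws, size ws = L -> path_in edge (predC T) v ws ->
  ((#|V|%:Z * path_weight edge w v ws) <= (#|V| * #|V| * W + #|V|)%:Z - L%:Z)%R.
Proof.
elim: L {-2}L (leqnn L) => [|L IHL] L0.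
  rewrite leqn0 => /eqP -> v ws /size0nil -> _ /=; rewrite mulr0 subr0; lia.
move=> HL v ws Hs Hp.
case: (ltnP L0 #|V|) => HLn.
  have := weight_le_size v ws; rewrite Hs => H.
  have H0 : (0 <= #|V|%:Z)%R by [].
  have := ler_wpM2l H0 H. rewrite -PoszM. nia.
pose f (i : 'I_#|V|.+1) := odflt v (run edge v (take i ws)).
have : ~~ injectiveb f.
  apply/negP => /injectiveP /leq_card; rewrite card_ord; lia.
case/injectivePn => i0 [j0 Hij Hf].
wlog Hlt : i0 j0 Hij Hf / i0 < j0.
  move=> Hw; case: (ltngtP i0 j0) => H.
  - exact: Hw Hij Hf H.
  - apply: (Hw j0 i0) => //; by rewrite eq_sym.
  - by move: Hij; rewrite (ord_inj H) eqxx.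
set i := nat_of_ord i0; set j := nat_of_ord j0.
have Hj : j <= #|V| by rewrite -ltnS ltn_ord.
have [u [Hru Hpu]] := path_in_take i Hp.
have Hfi : f i0 = u by rewrite /f Hru.
pose cyc := take (j - i) (drop i ws).
pose ws3 := drop (j - i) (drop i ws).
have Hdi : drop i ws = cyc ++ ws3 by rewrite cat_take_drop.
have Hws : ws = take i ws ++ (cyc ++ ws3) by rewrite -Hdi cat_take_drop.
have [u' [Hru' _]] := path_in_take j Hp.
have Hcyc : run edge u cyc = Some u.
  have : take j ws = take i ws ++ cyc by rewrite /cyc -takeD subnKC // ltnW.
  move=> Ht; move: Hru'; rewrite Ht run_cat Hru /= => Hc.
  by rewrite Hc; congr Some; rewrite -Hfi Hf /f Ht run_cat Hru /= Hc.
have Hsc : size cyc = j - i.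
  rewrite /cyc size_take size_drop; case: ltnP => //; lia.
have Hpc : path_in edge (predC T) u (cyc ++ ws3) by rewrite -Hdi.
rewrite (path_in_cat _ _ Hcyc) in Hpc; case/andP: Hpc => Hpc Hp3.
have Hwc : (path_weight edge w u cyc < 0)%R.
  apply: Hneg => //; rewrite Hsc; lia.
have Hp1 : path_in edge (predC T) v (take i ws).
  by move: Hp; rewrite {1}Hws (path_in_cat _ _ Hru) => /andP[].
have Hrem : path_in edge (predC T) v (take i ws ++ ws3) by rewrite (path_in_cat _ _ Hru) Hp1.
have Hsz : size (take i ws ++ ws3) = L0 - (j - i).
  move: Hs; rewrite {1}Hws !size_cat Hsc; lia.
have HL' : L0 - (j - i) <= L by lia.
have := IHL (L0 - (j - i)) HL' v _ Hsz Hrem.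
rewrite (path_weight_cat w _ Hru).
have E : path_weight edge w v ws = (path_weight edge w v (take i ws) + (path_weight edge w u cyc + path_weight edge w u ws3))%R.
  by rewrite {1}Hws (path_weight_cat w _ Hru) (path_weight_cat w _ Hcyc).
rewrite E => H.
have Hi : i < j by [].
clear -H Hwc Hs Hj Hi HLn. nia.
Qed.
End Cyc.


Section Attr.
Variables (V A : finType) (isMax T : pred V) (edge : V -> A -> option V).
Variable a0 : A.
Hypothesis dfree : deadlock_free edge.
Hypothesis tmin : targets_min isMax T.

Definition Fattr (X : {set V}) : {set V} :=
  [set x | T x || (if isMax x then [exists a, oapp (fun y => y \in X) false (edge x a)]
                               else [forall a, oapp (fun y => y \in X) true (edge x a)])].

Lemma Fattr_mono : {homo Fattr : X Y / X \subset Y}.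
Proof.
move=> X Y /fintype.subsetP HXY; apply/fintype.subsetP => x; rewrite !inE.
case/orP => [->//|]; case: (isMax x) => H; apply/orP; right.
- case/existsP: H => a; case E: (edge x a) => [y|] //= Hy.
  by apply/existsP; exists a; rewrite E /=; apply: HXY.
- apply/forallP => a; have := forallP H a; case: (edge x a) => //= y; exact: HXY.
Qed.

Definition Att := fixset Fattr.
Definition itA k := iter k Fattr finset.set0.

Lemma Att_eq x : (x \in Att) = (x \in Fattr Att).
Proof. by rewrite fixsetK //; exact: Fattr_mono. Qed.

Lemma T_Att x : T x -> x \in Att.
Proof. by move=> Tx; rewrite Att_eq inE Tx. Qed.

Definition someValid x := odflt a0 [pick a | edge x a != None].

Lemma someValid_ok x : edge x (someValid x) != None.
Proof.
rewrite /someValid; case: pickP => [a //|H] /=.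
by have [a Ha] := dfree x; rewrite H in Ha.
Qed.

Definition esc x := odflt (someValid x) [pick a | oapp (fun y => y \notin Att) false (edge x a)].

Lemma esc_ok x : edge x (esc x) != None.
Proof.
rewrite /esc; case: pickP => [a /=|H] /=; last exact: someValid_ok.
by case: (edge x a).
Qed.

Lemma esc_out x : x \notin Att -> ~~ isMax x -> exists y, edge x (esc x) = Some y /\ y \notin Att.
Proof.
rewrite Att_eq inE negb_or => /andP[_]; move=> H Hm; rewrite (negbTE Hm) in H.
case/forallPn: H => a Ha.
rewrite /esc; case: pickP => [b /=|H] /=.
  by case: (edge x b) => //= y Hy; exists y.
by have := H a; case E: (edge x a) Ha => [y|] //= ->.
Qed.

Lemma max_out x a y : x \notin Att -> isMax x -> edge x a = Some y -> y \notin Att.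
Proof.
rewrite Att_eq inE negb_or => /andP[_ H] Hm E; rewrite Hm in H.
apply/negP => Hy; move/negP: H; apply; apply/existsP; exists a; by rewrite E.
Qed.

Definition good x a := oapp (fun y => y \in itA (fix_order Fattr x).-1) false (edge x a).
Definition attS x := odflt (someValid x) [pick a | good x a].

Lemma attS_ok x : edge x (attS x) != None.
Proof.
rewrite /attS; case: pickP => [a /=|H] /=; last exact: someValid_ok.
by rewrite /good; case: (edge x a).
Qed.

Lemma att_step k x a y : x \in itA k.+1 -> ~~ T x -> edge x a = Some y ->
  (isMax x -> a = attS x) -> y \in itA k.
Proof.
move=> Hx HT E Ha.
have Hx' := Hx; rewrite /itA /= inE (negbTE HT) /= in Hx'.
case Hm: (isMax x) Hx' => Hx'.
- have Hfx : x \in Att by apply: (fintype.subsetP (iter_sub_fix Fattr_mono k.+1)).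
  have Hr : 0 < fix_order Fattr x by rewrite fix_order_gt0.
  have Hrk : fix_order Fattr x <= k.+1 by apply: (fix_order_small Fattr_mono Hx).
  have Hin : x \in itA (fix_order Fattr x).
    by rewrite /itA (in_iter_fixE Fattr_mono) Hr leqnn.
  rewrite /itA -(prednK Hr) /= inE (negbTE HT) Hm in Hin.
  case/existsP: Hin => a' Ha'.
  rewrite (Ha Hm) /attS in E.
  case: pickP E => [b Hb|H] E /=; last by have := H a'; rewrite /good Ha'.
  move: Hb; rewrite /good /= E /= => Hb.
  apply: (fintype.subsetP (subset_iter Fattr_mono _)) Hb; lia.
- by have := forallP Hx' a; rewrite E.
Qed.

Definition attStrat : strategy V A := fun v0 ws => attS (odflt v0 (run edge v0 ws)).
Definition escStrat : strategy V A := fun v0 ws => esc (odflt v0 (run edge v0 ws)).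

Lemma attStrat_ok b : valid_strategy isMax edge b attStrat.
Proof. by move=> v0 ws u Hr _; rewrite /attStrat Hr; apply: attS_ok. Qed.
Lemma escStrat_ok b : valid_strategy isMax edge b escStrat.
Proof. by move=> v0 ws u Hr _; rewrite /escStrat Hr; apply: esc_ok. Qed.

End Attr.


Section Attr2.
Variables (V A : finType) (isMax T : pred V) (edge : V -> A -> option V).
Variable a0 : A.
Hypothesis dfree : deadlock_free edge.
Local Notation Att := (Att isMax T edge).
Local Notation itA := (itA isMax T edge).
Local Notation attStrat := (attStrat isMax T edge a0).
Local Notation escStrat := (escStrat isMax T edge a0).

Lemma attr_in v : max_attractor isMax T edge v -> v \in Att.
Proof.
case=> s [Hs Hreach]; apply/negPn/negP => Hv.
have Hmin : valid_strategy isMax edge false escStrat by apply: escStrat_ok.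
have Hout : forall n, pos isMax edge escStrat s v n \notin Att.
  elim=> [//|n IH].
  have [Hr He] := run_state_edge v Hmin Hs n.
  case Hm: (isMax (pos isMax edge escStrat s v n)).
  - exact: max_out IH Hm He.
  - have [y [Ey Hy]] := esc_out a0 IH (negbT Hm).
    move: He; rewrite letter_eq Hm /escStrat Hr /= Ey => -[<-] //.
have [n Tn] : exists n, T (pos isMax edge escStrat s v n).
  apply: (Hreach (pos isMax edge escStrat s v) (letter isMax edge escStrat s v)); split => // n.
  - by have [_ ->] := run_state_edge v Hmin Hs n.
  - by move=> Hm; rewrite letter_eq Hm (state_word isMax edge).
by have := Hout n; rewrite (T_Att isMax edge Tn).
Qed.

Lemma in_attr v : v \in Att -> max_attractor isMax T edge v.
Proof.
move=> Hv; exists attStrat; split; first exact: attStrat_ok.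
move=> p a [H0 He Hc].
have Hrun : forall n, run edge v (mkseq a n) = Some (p n).
  elim=> [|n IH]; first by rewrite H0.
  by rewrite mkseqS run_rcons IH /= He.
suff : forall k n, p n \in itA k -> exists m, T (p m).
  by move/(_ #|V| 0); rewrite H0; apply.
elim=> [|k IH] n; first by rewrite /itA /= inE.
move=> Hn; case HT: (T (p n)); first by exists n.
apply: (IH n.+1); apply: (att_step (a:=a n) Hn (negbT HT) (He n)).
by move=> Hm; rewrite (Hc n Hm) /attStrat Hrun.
Qed.

Lemma reach_att (smin : strategy V A) v :
  valid_strategy isMax edge false smin -> v \in Att ->
  exists m, m <= #|V| /\ T (pos isMax edge smin attStrat v m).
Proof.
move=> Hmin Hv.
have Hmax : valid_strategy isMax edge true attStrat by apply: attStrat_ok.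
suff : forall k n, pos isMax edge smin attStrat v n \in itA k ->
   exists m, m <= n + k /\ T (pos isMax edge smin attStrat v m).
  by move/(_ #|V| 0); apply.
elim=> [|k IH] n; first by rewrite /itA /= inE.
move=> Hn; case HT: (T (pos isMax edge smin attStrat v n)).
  by exists n; split => //; apply: leq_addr.
have [Hr He] := run_state_edge v Hmin Hmax n.
have [m [Hm Tm]] : exists m, m <= n.+1 + k /\ T (pos isMax edge smin attStrat v m).
  apply: IH; apply: (att_step Hn (negbT HT) He).
  by move=> Hm; rewrite letter_eq Hm /attStrat Hr.
by exists m; split => //; rewrite addnS -addSn.
Qed.
End Attr2.


Definition Wbound (V A : finType) (w : V -> A -> int) : nat := \max_(u : V) \max_(a : A) `|w u a|%N.
Definition Cbound (V : finType) (c : V -> int) : nat := \max_(u : V) `|c u|%N.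

Lemma Wbound_ok (V A : finType) (w : V -> A -> int) u a :
  (w u a <= (Wbound w)%:Z)%R /\ (- (Wbound w)%:Z <= w u a)%R.
Proof.
have : (`|w u a| <= Wbound w)%N.
  apply: leq_trans (leq_bigmax u); exact: (leq_bigmax (F := fun a => `|w u a|%N) a).
lia.
Qed.

Lemma Cbound_ok (V : finType) (c : V -> int) u : (- (Cbound c)%:Z <= c u)%R.
Proof. have : (`|c u| <= Cbound c)%N by apply: (leq_bigmax (F := fun u => `|c u|%N) u). lia. Qed.

Lemma sum_lb (W : nat) (f : nat -> int) n : (forall i, (- W%:Z <= f i)%R) ->
  (- (n * W)%:Z <= \sum_(i < n) f i)%R.
Proof.
move=> H; elim: n => [|n IH]; first by rewrite big_ord0.
rewrite big_ord_recr /=; apply: le_trans (lerD IH (H n)); rewrite mulSn; lia.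
Qed.

Section Val.
Variables (R : realType) (V A : finType) (isMax T : pred V) (edge : V -> A -> option V)
  (w : V -> A -> int) (c : V -> int) (a0 : A).
Hypothesis dfree : deadlock_free edge.
Local Notation Att := (Att isMax T edge).
Local Notation attStrat := (attStrat isMax T edge a0).
Local Notation gv := (@game_value V A isMax T edge w R c).

Lemma val_lb v : v \in Att ->
  (((- (#|V| * Wbound w + Cbound c)%:Z)%R%:~R)%:E <= gv v)%E.
Proof.
move=> Hv; apply: le_ereal_inf_tmp => _ [smin Hmin <-].
apply: (@le_trans _ _ (payoff isMax T edge w c smin attStrat v)); last first.
  by apply: ereal_sup_ubound; exists attStrat => //; exact: attStrat_ok.
have [m [Hm Tm]] := reach_att a0 dfree Hmin Hv.
have Hex : exists n, (fun n => T (pos isMax edge smin attStrat v n)) n by exists m.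
case: (ex_minnP Hex) => m0 Tm0 Hmin0.
rewrite (payoff_hit w R c Tm0); last first.
  move=> k Hk; apply/negP => Tk; have := Hmin0 k Tk; lia.
rewrite lee_fin ler_int.
have H1 := @sum_lb (Wbound w) (fun i => w (pos isMax edge smin attStrat v i) (letter isMax edge smin attStrat v i)) m0 (fun i => (Wbound_ok w _ _).2).
have H2 := Cbound_ok c (pos isMax edge smin attStrat v m0).
have H3 : (m0 <= #|V|)%N := leq_trans (Hmin0 m Tm) Hm.
have H4 : (m0 * Wbound w <= #|V| * Wbound w)%N by apply: leq_mul.
lia.
Qed.

End Val.


Section Minf.
Variables (R : realType) (V A : finType) (isMax T : pred V) (edge : V -> A -> option V)
  (w : V -> A -> int) (c : V -> int) (a0 : A).
Hypothesis dfree : deadlock_free edge.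
Hypothesis Hneg : neg_cycles_outside_targets T edge w.
Local Notation gv := (@game_value V A isMax T edge w R c).
Hypothesis Hfin : forall u, gv u <> +oo%E.

Lemma fin_strat u : exists sK : strategy V A * R, valid_strategy isMax edge false sK.1 /\
   forall smax, valid_strategy isMax edge true smax ->
     (payoff isMax T edge w c sK.1 smax u <= sK.2%:E)%E.
Proof.
have : (gv u < +oo)%E by rewrite ltey; apply/eqP; exact: Hfin.
case/ereal_inf_lt => _ [s Hs <-] Hlt.
set y := ereal_sup _ in Hlt *.
exists (s, fine y); split => // smax Hmax.
apply: (@le_trans _ _ y).
  by apply: ereal_sup_ubound; exists smax.
move: Hlt; case: y => [r| |] //= _; exact: leNye.
Qed.

Lemma Kmax_ok (K : V -> R) u : (K u <= \sum_(x : V) `|K x|)%R.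
Proof.
rewrite (bigD1 u) //=; apply: le_trans (ler_norm _) _.
by rewrite lerDl sumr_ge0 // => i _; exact: normr_ge0.
Qed.


Local Notation Att := (Att isMax T edge).
Local Notation esc := (esc isMax T edge a0).

Lemma val_minf v : v \notin Att -> gv v = -oo%E.
Proof.
move=> Hv.
have [F HF] := boolp.choice fin_strat.
pose sig u := (F u).1. pose K u := (F u).2.
pose Kmax := (\sum_(x : V) `|K x|)%R.
suff H : forall M : R, (gv v <= M%:E)%E.
  case E: (gv v) => [r| |] //.
  - have := H (r - 1)%R. rewrite E lee_fin. move=> Hr. exfalso. move: Hr. apply/negP. rewrite -ltNge. rewrite ltrBlDr. rewrite ltrDl. by [].
  - by have := H 0%R; rewrite E.
move=> M.
pose t := Num.Def.trunc `|Kmax - M|%R.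
pose k := (#|V| * Wbound w + 2 + t)%N.
pose N := (#|V| * k)%N.
pose smin' : strategy V A := fun v0 ws =>
  if size ws < N then esc (odflt v0 (run edge v0 ws))
  else sig (odflt v0 (run edge v0 (take N ws))) (odflt v0 (run edge v0 (take N ws))) (drop N ws).
have Hmin' : valid_strategy isMax edge false smin'.
  move=> v0 ws x Hr Hm; rewrite /smin'; case: ifP => _.
  - rewrite Hr; exact: esc_ok.
  - move: Hr; rewrite -{1}(cat_take_drop N ws) run_cat.
    case E: (run edge v0 (take N ws)) => [y|] //= Hr.
    exact: ((HF y).1 _ _ _ Hr Hm).
apply: (@le_trans _ _ (ereal_sup [set payoff isMax T edge w c smin' smax v | smax in
                             [set s | valid_strategy isMax edge true s]])).
  by apply: ereal_inf_lbound; exists smin'.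
apply: ge_ereal_sup => _ [smax Hmax <-].
pose P := pos isMax edge smin' smax v.
pose L := letter isMax edge smin' smax v.
pose st := state isMax edge smin' smax v.
have Hout : forall n, n <= N -> P n \notin Att.
  elim=> [_|n IH Hn]; first exact: Hv.
  have IH' := IH (ltnW Hn).
  have [Hr He] := run_state_edge v Hmin' Hmax n.
  case Hm: (isMax (P n)).
  - exact: max_out IH' Hm He.
  - have [y [Ey Hy]] := esc_out a0 IH' (negbT Hm).
    move: He; rewrite letter_eq Hm /smin' (size_word isMax edge) Hn Hr /= Ey => -[E1]; by rewrite /P -E1.

pose u := P N. pose wN := (st N).2.
have [HrN _] := run_state_edge v Hmin' Hmax N.
have HsN : size wN = N by rewrite /wN (size_word isMax edge).
pose smax' : strategy V A := fun v0 ws =>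
  if v0 == u then smax v (wN ++ ws) else someValid edge a0 (odflt v0 (run edge v0 ws)).
have Hmax' : valid_strategy isMax edge true smax'.
  move=> v0 ws x Hr Hm; rewrite /smax'; case: (eqVneq v0 u) => [E|NE].
  - move: Hr; rewrite E => Hr; apply: (Hmax v (wN ++ ws) x) => //.
    by rewrite run_cat HrN /=.
  - rewrite Hr; exact: someValid_ok.
have Hch : forall x ws, Defs.choice isMax smin' smax v x (wN ++ ws) = Defs.choice isMax (sig u) smax' u x ws.
  move=> x ws; rewrite /Defs.choice; case: (isMax x).
  - by rewrite /smax' eqxx.
  - rewrite /smin' size_cat HsN ltnNge leq_addr /=.
    by rewrite take_size_cat // drop_size_cat // HrN.
pose st' := state isMax edge (sig u) smax' u.
have Hst : forall m, st (N + m) = ((st' m).1, wN ++ (st' m).2).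
  elim=> [|m IH]; first by rewrite addn0 /st' /= cats0 [st N]surjective_pairing.
  rewrite addnS /st /= -/st IH /st' /=.
  case: (state isMax edge (sig u) smax' u m) => x ws /=.
  rewrite Hch; case: (edge x _) => [y|]; by rewrite rcons_cat.

pose P' := pos isMax edge (sig u) smax' u.
pose L' := letter isMax edge (sig u) smax' u.
have HP : forall m, P (N + m) = P' m by move=> m; rewrite /P /pos -/st Hst.
have HL : forall m, L (N + m) = L' m.
  by move=> m; rewrite /L /letter -/st Hst /= Hch.
have Hle := (HF u).2 smax' Hmax'.
have [m0 [Tm0 Hm0]] : exists n, T (P' n) /\ forall k, k < n -> ~~ T (P' k).
  apply: (@payoff_fin _ _ isMax T edge w R c).
  by move=> E; move: Hle; rewrite E.
rewrite (payoff_hit w R c Tm0 Hm0) in Hle.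
have HT : T (P (N + m0)) by rewrite HP.
rewrite (payoff_hit w R c HT); last first.
  move=> j Hj; case: (leqP j N) => HjN.
    by apply/negP => /(T_Att isMax edge); apply/negP; apply: Hout.
  have -> : j = N + (j - N) by lia.
  have Hj2 : j - N < m0 by lia.
  by move: (Hm0 (j - N) Hj2); rewrite -HP.

have Hsplit : (\sum_(i < N + m0) w (P i) (L i) =
   \sum_(i < N) w (P i) (L i) + \sum_(i < m0) w (P' i) (L' i))%R.
  rewrite big_split_ord /=; congr (_ + _)%R; apply: eq_bigr => i _; by rewrite HP HL.
have HPm : c (P (N + m0)) = c (P' m0) by rewrite HP.
rewrite Hsplit HPm.
have Hw := word_weight w v Hmin' Hmax N.
have Hpi : path_in edge (predC T) v wN.
  apply: (word_path_in Hmin' Hmax) => i Hi /=.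
  by apply/negP => /(T_Att isMax edge); apply/negP; apply: Hout.
have Hb := path_bound Hneg (W := Wbound w) (fun u a => (Wbound_ok w u a).1) HsN Hpi.
have Hpos : 0 < #|V| by apply/card_gt0P; exists v.
have HS : (\sum_(i < N) w (P i) (L i) <= - 1 - t%:Z)%R.
  rewrite Hw; rewrite /N /k in Hb.
  move: Hb Hpos; set pw := path_weight _ _ _ _; set n := #|V|; set W := Wbound w => Hb Hpos.
  have H1 : (n%:Z * (pw + 1 + t%:Z) <= 0)%R by clear -Hb; lia.
  have Hn : (0 < n%:Z)%R by [].
  rewrite (pmulr_rle0 _ Hn) in H1; lia.

rewrite lee_fin in Hle; rewrite lee_fin -addrA intrD.
have HS' : (((\sum_(i < N) w (P i) (L i))%:~R : R) <= (-1 - t%:Z)%:~R)%R by rewrite ler_int.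
have Et : (((-1 - t%:Z)%:~R : R) = -1 - t%:R)%R by rewrite intrD intrN.
rewrite Et in HS'.
have Ht : (`|Kmax - M| < (t%:R : R) + 1)%R by rewrite natr1; apply: truncnS_gt.
have Hn : (Kmax - M <= `|Kmax - M|)%R by apply: ler_norm.
have HKm : (K u <= Kmax)%R by apply: Kmax_ok.
rewrite /K in HKm.
lra.
Qed.

End Minf.


Unset Implicit Arguments.

Theorem proposition3 (R : realType) (V A : finType) (isMax T : pred V)
  (edge : V -> A -> option V) (w : V -> A -> int) (c : V -> int) :
  deadlock_free edge ->
  targets_min isMax T ->
  strongly_connected_outside_targets T edge ->
  neg_cycles_outside_targets T edge w ->
  (forall v, @game_value V A isMax T edge w R c v <> +oo%E) ->
  forall v, ~~ T v ->
    (@game_value V A isMax T edge w R c v = -oo%E <->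
     ~ max_attractor isMax T edge v).
Proof.
move=> dfree tmin sc Hneg Hfin v Tv.
have [a0 _] := dfree v.
split.
- move=> Hval Hattr.
  have Hin := @attr_in V A isMax T edge a0 dfree v Hattr.
  have := @val_lb R V A isMax T edge w c a0 dfree v Hin.
  by rewrite Hval.
- move=> Hn; apply: (@val_minf R V A isMax T edge w c a0 dfree Hneg Hfin v).
  apply/negP => Hin; apply: Hn; exact: (@in_attr V A isMax T edge a0 dfree v Hin).
Qed.
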